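(* Let $(TQ\times\mathbb R^m,\vec\lambda^L,E_L)$ be the $m$-contact Lagrangian system of a regular Lagrangian $L:TQ\times\mathbb R^m\to\mathbb R$, and let $$X=F_i\frac{\partial}{\partial q^i}+G_j\frac{\partial}{\partial \dot q^j}+H_k\frac{\partial}{\partial z^k}$$ be a vector field on $TQ\times\mathbb R^m$ which is an $m$-Cartan symmetry, i.e. $\mathcal L_X\lambda^L_i=df_i$ for some $f_i\in C^\infty(TQ\times\mathbb R^m)$, $i=1,\dots,m$. Then for each $i=1,\dots,m$, the $1$-form $d\big(f_i-H_i+X^v(L)\big)$ vanishes on the Reeb distribution, i.e. $d\big(f_i-H_i+X^v(L)\big)(R_k)=0$ for all $k=1,\dots,m$.
   Context: $Q$ is an $n$-dimensional manifold; $TQ\times\mathbb R^m$ has local coordinates $(q^i,\dot q^i,z^1,\dots,z^m)$. $L$ is regular if $W_{ij}=\partial^2L/\partial\dot q^i\partial\dot q^j$ is invertible, with inverse $(W^{ij})$. Define $\lambda^L_k=dz^k-\frac{\partial L}{\partial\dot q^j}dq^j$ ($k=1,\dots,m$) and the Reeb vector fields $R_k=\frac{\partial}{\partial z^k}-W^{ij}\frac{\partial^2L}{\partial\dot q^i\partial z^k}\frac{\partial}{\partial\dot q^j}$, which span the Reeb distribution $\mathcal R$. For $X$ as in the claim, $X^v:=S(X)=F_i\frac{\partial}{\partial\dot q^i}$, where $S=\frac{\partial}{\partial\dot q^i}\otimes dq^i$ is the vertical endomorphism; thus $X^v(L)=F_i\frac{\partial L}{\partial\dot q^i}$. *)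

(* Defs.v *)
(* Local-coordinate formalization on a chart domain
   U (open) of TQ x R^m, identified with an open subset of R^(n+n+m)
   with coordinates (q^1..q^n, qdot^1..qdot^n, z^1..z^m). *)
From HB Require Import structures.
From mathcomp Require Import all_boot all_order all_algebra.
From mathcomp Require Import all_classical all_reals.
From mathcomp Require Import topology normedtype derive.
Set Implicit Arguments. Unset Strict Implicit. Unset Printing Implicit Defensive.
Import Order.TTheory GRing.Theory Num.Theory.
Import numFieldNormedType.Exports.
Local Open Scope classical_set_scope.
Local Open Scope ring_scope.

Section Defs.
Variables (R : realType) (n m : nat).

Notation N := (n + n + m)%N.
Notation pt := 'rV[R]_N.

Definition iq (i : 'I_n) : 'I_N := lshift m (lshift n i).
Definition iv (i : 'I_n) : 'I_N := lshift m (rshift n i).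
Definition iz (k : 'I_m) : 'I_N := rshift (n + n) k.

Definition pd (f : pt -> R) (a : 'I_N) : pt -> R :=
  fun x => derive f x (delta_mx 0 a).

Fixpoint iter_pd (s : seq 'I_N) (f : pt -> R) : pt -> R :=
  match s with
  | [::] => f
  | a :: s' => pd (iter_pd s' f) a
  end.

Definition smooth_on (U : set pt) (f : pt -> R) : Prop :=
  forall (s : seq 'I_N) (x : pt), U x -> differentiable (iter_pd s f) x.

Definition blk (T : Type) (A B : 'I_n -> T) (C : 'I_m -> T) (b : 'I_N) : T :=
  match fintype.split b with
  | inl b' => match fintype.split b' with inl i => A i | inr i => B i end
  | inr k => C k
  end.

Definition vfield := 'I_N -> pt -> R.
Definition oneform := 'I_N -> pt -> R.

(* Lie derivative of a 1-form along a vector field (coordinate formula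
   (L_X a)_c = X^b d_b a_c + a_b d_c X^b) *)
Definition lie (X : vfield) (al : oneform) : oneform :=
  fun c x => \sum_(b < N) X b x * pd (al c) b x + \sum_(b < N) al b x * pd (X b) c x.

Definition dfun (g : pt -> R) : oneform := fun a => pd g a.
Definition eval1 (al : oneform) (Y : vfield) (x : pt) : R :=
  \sum_(a < N) al a x * Y a x.

Definition Wmx (L : pt -> R) (x : pt) : 'M[R]_n :=
  \matrix_(i, j) pd (pd L (iv j)) (iv i) x.

Definition regular_on (U : set pt) (L : pt -> R) : Prop :=
  forall x, U x -> Wmx L x \in unitmx.

(* lambda^L_k = dz^k - dL/dqdot^j dq^j *)
Definition lamL (L : pt -> R) (k : 'I_m) : oneform :=
  blk (fun j x => - pd L (iv j) x) (fun _ _ => 0)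
      (fun l _ => if l == k then 1 else 0).

(* Reeb vector fields R_k = d/dz^k - W^{ij} d^2L/dqdot^i dz^k d/dqdot^j *)
Definition reeb (L : pt -> R) (k : 'I_m) : vfield :=
  blk (fun _ _ => 0)
      (fun j x => - \sum_(i < n) invmx (Wmx L x) i j * pd (pd L (iz k)) (iv i) x)
      (fun l _ => if l == k then 1 else 0).

Definition vf (F G : 'I_n -> pt -> R) (H : 'I_m -> pt -> R) : vfield := blk F G H.

(* X^v(L) = S(X)(L) = F_i dL/dqdot^i *)
Definition XvL (F : 'I_n -> pt -> R) (L : pt -> R) : pt -> R :=
  fun x => \sum_(i < n) F i x * pd L (iv i) x.

End Defs.

(* Main.v *)
Require Import Defs.
From HB Require Import structures.
From mathcomp Require Import all_boot all_order all_algebra.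
From mathcomp Require Import all_classical all_reals.
From mathcomp Require Import topology normedtype derive.
From mathcomp Require Import lra ring.
Import Order.TTheory GRing.Theory Num.Theory.
Import numFieldNormedType.Exports.
Local Open Scope classical_set_scope.
Local Open Scope ring_scope.

Lemma dirA (R : realType) (V : normedModType R) (f : V -> R) (y w : V) (s : R) :
  derivable f (y + s *: w) w ->
  is_derive s 1 (fun t : R => f (y + t *: w)) (derive f (y + s *: w) w).
Proof.
move=> d.
have E : (fun h : R => h^-1 *: (((fun t : R => f (y + t *: w)) \o shift s) (h *: 1) - f (y + s *: w)))
   = (fun h : R => h^-1 *: ((f \o shift (y + s *: w)) (h *: w) - f (y + s *: w))).
  apply/funext => h /=; congr (_ *: (f _ - _)).
  by rewrite [h%:A]mulr1 scalerDl addrCA addrA.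
apply: DeriveDef; first by rewrite /derivable E.
by rewrite /derive E.
Qed.




Lemma dirB (R : realType) (V : normedModType R) (f : V -> R) (x u v : V) (h : R)
  (S : set V) : 0 < h ->
  (forall s t, 0 <= s <= h -> 0 <= t <= h -> S (x + s *: u + t *: v)) ->
  (forall p, S p -> differentiable f p /\ differentiable (fun y => derive f y u) p) ->
  exists p, S p /\ f (x + h *: u + h *: v) - f (x + h *: u) - f (x + h *: v) + f x
     = h * h * derive (fun y => derive f y u) p v.
Proof.
move=> h0 HS Hd.
have hh : 0 <= h <= h by apply/andP; split; lra.
have h00 : (0:R) <= 0 <= h by apply/andP; split; lra.
pose phi := fun s : R => f ((x + h *: v) + s *: u) - f (x + s *: u).
have dphi : forall s, 0 <= s <= h -> is_derive s 1 phi
   (derive f ((x + h *: v) + s *: u) u - derive f (x + s *: u) u).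
  move=> s sh; apply: is_deriveB; apply: dirA; apply: diff_derivable.
    by rewrite addrAC; apply: (Hd _ (HS _ _ sh hh)).1.
  by have := (Hd _ (HS _ _ sh h00)).1; rewrite scale0r addr0.
have oc : forall c, c \in `]0, h[ -> 0 <= c <= h.
  by move=> c; rewrite in_itv /= => /andP[a b]; apply/andP; split; lra.
have cphi : {within `[0, h], continuous phi}.
  apply: derivable_within_continuous => c; rewrite in_itv /= => cI.
  exact: (@ex_derive _ _ _ _ _ _ _ (dphi c cI)).
have [xi xiI Exi] := MVT h0 (fun c cI => dphi c (oc c cI)) cphi.
have xih := oc _ xiI.
pose psi := fun t : R => derive f ((x + xi *: u) + t *: v) u.
have dpsi : forall t, 0 <= t <= h -> is_derive t 1 psi
   (derive (fun y => derive f y u) ((x + xi *: u) + t *: v) v).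
  move=> t th; apply: dirA; apply: diff_derivable.
  exact: (Hd _ (HS _ _ xih th)).2.
have cpsi : {within `[0, h], continuous psi}.
  apply: derivable_within_continuous => c; rewrite in_itv /= => cI.
  exact: (@ex_derive _ _ _ _ _ _ _ (dpsi c cI)).
have [eta etaI Eeta] := MVT h0 (fun c cI => dpsi c (oc c cI)) cpsi.
exists (x + xi *: u + eta *: v); split; first exact: HS xih (oc _ etaI).
move: Exi Eeta; rewrite /phi /psi !scale0r !addr0 subr0 (addrAC x (h *: v) (xi *: u)).
rewrite (addrAC x (h *: v) (h *: u)) => E1 E2.
have Hr : forall a b c d : R, a - b - c + d = a - b - (c - d) by move=> *; ring.
by rewrite Hr E1 E2; ring.
Qed.
Lemma bnd (R : realType) (a b s t h r : R) : 0 <= a -> 0 <= b -> 0 <= s -> s <= h ->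
  0 <= t -> t <= h -> 0 < h -> h * (2 * (a + b + 1)) = r -> s * a + t * b < r.
Proof.
move=> a0 b0 s0 sh t0 th h0 <-.
have : (h - s) * a >= 0 by rewrite mulr_ge0 // subr_ge0.
have : (h - t) * b >= 0 by rewrite mulr_ge0 // subr_ge0.
have : h * a >= 0 by rewrite mulr_ge0 // ltW.
have : h * b >= 0 by rewrite mulr_ge0 // ltW.
nra.
Qed.
Lemma fin (R : realType) (a b c d : R) : c = d -> `|a - c| < `|a - b| / 2 ->
  `|b - d| < `|a - b| / 2 -> False.
Proof.
move=> <- h1 h2.
have := ler_distD c a b.
rewrite (distrC c b) => h3.
lra.
Qed.

Lemma schwarz (R : realType) (V : normedModType R) (f : V -> R) (U : set V) (x u v : V) :
  open U -> U x ->
  (forall p, U p -> differentiable f p /\ differentiable (fun y => derive f y u) p /\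
     differentiable (fun y => derive f y v) p /\
     differentiable (fun y => derive (fun z => derive f z u) y v) p /\
     differentiable (fun y => derive (fun z => derive f z v) y u) p) ->
  derive (fun y => derive f y u) x v = derive (fun y => derive f y v) x u.
Proof.
move=> oU Ux Hd.
set A := fun y => derive (fun z => derive f z u) y v.
set B := fun y => derive (fun z => derive f z v) y u.
rewrite -/(A x) -/(B x).
have [//|neq] := eqVneq (A x) (B x).
pose e := `|A x - B x| / 2.
have e0 : 0 < e by rewrite divr_gt0 // normr_gt0 subr_eq0.
have nU : nbhs x U by apply: open_nbhs_nbhs; split.
have nA : \forall p \near x, `|A x - A p| < e.
  exact: (cvgrPdist_lt _ _).1 (differentiable_continuous (Hd x Ux).2.2.2.1) e e0.
have nB : \forall p \near x, `|B x - B p| < e.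
  exact: (cvgrPdist_lt _ _).1 (differentiable_continuous (Hd x Ux).2.2.2.2) e e0.
have /nbhs_ballP[r r0 Hr] : nbhs x (fun p => U p /\ `|A x - A p| < e /\ `|B x - B p| < e).
  exact: (filterS3 _ (fun p a b c => conj a (conj b c)) nU nA nB).
pose h := r / (2 * (`|u| + `|v| + 1)).
have h0 : 0 < h by rewrite divr_gt0 // mulr_gt0 // ltr_wpDl // addr_ge0.
have hr : h * (2 * (`|u| + `|v| + 1)) = r.
  by rewrite /h divfK // gt_eqF // mulr_gt0 // ltr_wpDl // addr_ge0.
have inb : forall s t, 0 <= s <= h -> 0 <= t <= h -> ball x r (x + s *: u + t *: v).
  move=> s t /andP[s0 sh] /andP[t0 th].
  rewrite -ball_normE /ball_ /= -addrA opprD addrA subrr sub0r normrN.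
  apply: (le_lt_trans (ler_normD _ _)); rewrite !normrZ !ger0_norm //.
  exact: (@bnd _ _ _ _ _ _ _ (normr_ge0 u) (normr_ge0 v) s0 sh t0 th h0 hr).
have [p1 [p1S E1]] := @dirB _ _ f x u v h (ball x r) h0 inb (fun p pS => conj (Hd p (Hr p pS).1).1 (Hd p (Hr p pS).1).2.1).
have inb' : forall s t, 0 <= s <= h -> 0 <= t <= h -> ball x r (x + s *: v + t *: u).
  by move=> s t sh th; rewrite addrAC; exact: inb.
have [p2 [p2S E2]] := @dirB _ _ f x v u h (ball x r) h0 inb' (fun p pS => conj (Hd p (Hr p pS).1).1 (Hd p (Hr p pS).1).2.2.1).
rewrite -/(A p1) in E1; rewrite -/(B p2) in E2.
have AB : A p1 = B p2.
  apply: (@mulfI _ (h * h)); first by rewrite mulf_neq0 // gt_eqF.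
  rewrite -E1 -E2 (addrAC x (h *: v) (h *: u)).
  by congr (_ + _); apply: addrAC.
have [_ [a1 _]] := Hr p1 p1S.
have [_ [_ b2]] := Hr p2 p2S.
by case: (@fin _ _ _ _ _ AB a1 b2).
Qed.

Section Blk.
Variables (n m : nat).
Lemma split_l a b (y : 'I_a) : fintype.split (lshift b y) = inl y.
Proof. exact: (unsplitK (inl y)). Qed.
Lemma split_r a b (y : 'I_b) : fintype.split (rshift a y) = inr y.
Proof. exact: (unsplitK (inr y)). Qed.
Lemma blk_q T (A B : 'I_n -> T) (C : 'I_m -> T) j : blk A B C (iq m j) = A j.
Proof. by rewrite /blk /iq !split_l. Qed.
Lemma blk_v T (A B : 'I_n -> T) (C : 'I_m -> T) j : blk A B C (iv m j) = B j.
Proof. by rewrite /blk /iv split_l split_r. Qed.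
Lemma blk_z T (A B : 'I_n -> T) (C : 'I_m -> T) j : blk A B C (iz n j) = C j.
Proof. by rewrite /blk /iz split_r. Qed.
Lemma sumN (R : realType) (g : 'I_(n + n + m) -> R) :
  \sum_(b < n + n + m) g b = \sum_(j < n) g (iq m j) + \sum_(j < n) g (iv m j) + \sum_(l < m) g (iz n l).
Proof. by rewrite big_split_ord /= big_split_ord. Qed.
End Blk.

Theorem theorem6 (R : realType) (n m : nat) (U : set 'rV[R]_(n + n + m))
  (L : 'rV[R]_(n + n + m) -> R)
  (F G : 'I_n -> 'rV[R]_(n + n + m) -> R) (H : 'I_m -> 'rV[R]_(n + n + m) -> R)
  (f : 'I_m -> 'rV[R]_(n + n + m) -> R) :
  open U ->
  smooth_on U L ->
  regular_on U L ->
  (forall i, smooth_on U (F i)) ->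
  (forall j, smooth_on U (G j)) ->
  (forall k, smooth_on U (H k)) ->
  (forall i, smooth_on U (f i)) ->
  (forall i a x, U x -> lie (vf F G H) (lamL L i) a x = dfun (f i) a x) ->
  forall (i k : 'I_m) (x : 'rV[R]_(n + n + m)), U x ->
    eval1 (dfun (fun y => f i y - H i y + XvL F L y)) (reeb L k) x = 0.
Proof.
move=> oU sL rL sF sG sH sf Hlie i k x Ux.
have dd : forall g s c, smooth_on U g -> derivable (iter_pd s g) x (delta_mx 0 c).
  by move=> g s c sg; apply: diff_derivable; exact: sg.
have Hg : forall c, pd (fun y => f i y - H i y + XvL F L y) c x =
    pd (f i) c x - pd (H i) c x +
    \sum_(j < n) (F j x * pd (pd L (iv m j)) c x + pd L (iv m j) x * pd (F j) c x).
  move=> c.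
  have -> : (fun y => f i y - H i y + XvL F L y) =
      (f i - H i) + \sum_(j < n) (F j * pd L (iv m j)).
    by apply/funext => y; rewrite fct_sumE.
  rewrite /pd deriveD; last first.
  - by apply: derivable_sum => j; apply: derivableM; [exact: (dd _ [::])|exact: (dd _ [:: iv m j])].
  - by apply: derivableB; exact: (dd _ [::]).
  rewrite deriveB; try exact: (dd _ [::]).
  rewrite derive_sum; last by move=> j; apply: derivableM; [exact: (dd _ [::])|exact: (dd _ [:: iv m j])].
  congr (_ + _); apply: eq_bigr => j _.
  by rewrite deriveM; [|exact: (dd _ [::])|exact: (dd _ [:: iv m j])].
have Hl : forall c (kk : R), lamL L i c = (fun _ => kk) ->
    pd (f i) c x = \sum_(j < n) (- pd L (iv m j) x) * pd (F j) c x + pd (H i) c x.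
  move=> c kk Ec.
  rewrite -[LHS]/(dfun (f i) c x) -Hlie // /lie Ec.
  rewrite big1 ?add0r; last first.
    by move=> b _; rewrite /pd (_ : (fun _ => kk) = cst kk) // derive_cst mulr0.
  rewrite sumN.
  rewrite (eq_bigr (fun j => - pd L (iv m j) x * pd (F j) c x)); last first.
    by move=> j _; rewrite /lamL /vf !blk_q.
  rewrite [X in _ + X + _]big1 ?addr0; last by move=> j _; rewrite /lamL blk_v mul0r.
  congr (_ + _).
  rewrite (bigD1 i) //= big1 ?addr0.
    by rewrite /lamL /vf !blk_z eqxx mul1r.
  by move=> l /negbTE nl; rewrite /lamL blk_z nl mul0r.
have Hgc : forall c kk, lamL L i c = (fun _ => kk) ->
    pd (fun y => f i y - H i y + XvL F L y) c x = \sum_(j < n) F j x * pd (pd L (iv m j)) c x.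
  move=> c kk Ec; rewrite Hg (Hl c kk Ec) big_split /=.
  under eq_bigr do rewrite mulNr.
  rewrite sumrN.
  by rewrite addrK addrCA addNr addr0.
set cc := fun i0 => pd (pd L (iz n k)) (iv m i0) x.
set Wi := invmx (Wmx L x).
have key : forall j, \sum_(l < n) Wmx L x l j * (\sum_(i0 < n) Wi i0 l * cc i0) = cc j.
  move=> j.
  under eq_bigr do rewrite mulr_sumr.
  rewrite exchange_big /=.
  rewrite (eq_bigr (fun i0 => cc i0 * (Wi *m Wmx L x) i0 j)); last first.
    move=> i0 _; rewrite mxE mulr_sumr; apply: eq_bigr => l _; ring.
  rewrite mulVmx ?rL //.
  rewrite (bigD1 j) //= big1 ?addr0.
    by rewrite mxE eqxx mulr1.
  by move=> i0 /negbTE ni; rewrite mxE ni mulr0.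
have schw : forall j, pd (pd L (iv m j)) (iz n k) x = cc j.
  move=> j; rewrite /cc /pd.
  apply: (@schwarz _ _ L U x _ _ oU Ux) => p Up.
  split; first exact: (sL [::] p Up).
  split; first exact: (sL [:: iv m j] p Up).
  split; first exact: (sL [:: iz n k] p Up).
  split; first exact: (sL [:: iz n k; iv m j] p Up).
  exact: (sL [:: iv m j; iz n k] p Up).
rewrite /eval1 /dfun sumN.
rewrite big1 ?add0r; last by move=> j _; rewrite /reeb blk_q mulr0.
rewrite (eq_bigr (fun l => (\sum_(j < n) F j x * Wmx L x l j) *
   (- \sum_(i0 < n) Wi i0 l * cc i0))); last first.
  move=> l _; rewrite (Hgc _ 0); last by rewrite /lamL blk_v.
  rewrite /reeb blk_v; congr (_ * _); apply: eq_bigr => j _; by rewrite mxE.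
rewrite [X in _ + X](bigD1 k) //= [X in _ + (_ + X)]big1 ?addr0; last first.
  by move=> l /negbTE nl; rewrite /reeb blk_z nl mulr0.
rewrite (Hgc _ (if k == i then 1 else 0)); last by rewrite /lamL blk_z.
rewrite /reeb blk_z eqxx mulr1.
rewrite [X in _ + X](eq_bigr (fun j => F j x * cc j)); last by move=> j _; rewrite schw.
have -> : \sum_(l < n) (\sum_(j < n) F j x * Wmx L x l j) *
     - (\sum_(i0 < n) Wi i0 l * cc i0) = - \sum_(j < n) F j x * cc j.
  under eq_bigr do rewrite mulr_suml.
  rewrite exchange_big /= -sumrN; apply: eq_bigr => j _.
  rewrite -key mulr_sumr -sumrN; apply: eq_bigr => l _; ring.
by rewrite addNr.
Qed.
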